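(* Let $p$ be a prime, let $d_1,\dots,d_l$ be integers with $1\le d_\lambda\le p$, and put $d=\sum_\lambda d_\lambda$. Then for every integer $s$ with $1\le s\le p-1$, \[ s-\mathrm{sht}_V(s)=\mathrm{sht}_V(p-s)+s+d-l-D_V. \]
   Context: Here $D_V:=\sum_{\lambda=1}^{l}\frac{(d_\lambda-1)d_\lambda}{2}$ and, for a positive integer $j$ with $p\nmid j$, $\mathrm{sht}_V(j):=\sum_{\lambda=1}^{l}\sum_{i=1}^{d_\lambda-1}\lfloor ij/p\rfloor$. (In the paper these arise from the decomposition $V\cong\bigoplus_\lambda V_{d_\lambda}$ of a representation of $\mathbb{Z}/p$ in characteristic $p$ into indecomposables.) *)

(* Defs.v *)
From mathcomp Require Import all_boot all_order all_algebra.
Set Implicit Arguments. Unset Strict Implicit. Unset Printing Implicit Defensive.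

(* A representation V of Z/p is encoded by the list ds = [d_1; ...; d_l]
   of the dimensions of its indecomposable summands V_{d_lambda}. *)

Definition D_V (ds : seq nat) : nat := \sum_(dl <- ds) ((dl - 1) * dl) %/ 2.

Definition sht_V (p : nat) (ds : seq nat) (j : nat) : nat :=
  \sum_(dl <- ds) \sum_(1 <= i < dl) (i * j) %/ p.

(* Main.v *)
Require Import Defs.
From mathcomp Require Import all_boot all_order all_algebra zify.
Import GRing.Theory.

Lemma tri n : (\sum_(1 <= i < n.+1) (i-1) + n = (n * n.+1) %/ 2)%N.
Proof.
elim: n => [|n IH]; first by rewrite big_geq.
rewrite big_nat_recr //=.
move: IH; set S := \sum_(1 <= i < n.+1) (i-1).
move=> IH. nia.
Qed.

Lemma pair_term p s i : prime p -> (1 <= s <= p - 1)%N -> (1 <= i < p)%N ->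
  (i * s %/ p + i * (p - s) %/ p = i - 1)%N.
Proof.
move=> pp /andP[s1 s2] /andP[i1 i2].
have p0 : (0 < p)%N by apply: prime_gt0.
have nd : ~~ (p %| i * s)%N.
  rewrite Euclid_dvdM // negb_or; apply/andP; split; apply/negP=> /dvdn_leq; lia.
have r0 : (0 < i * s %% p)%N by rewrite lt0n -/(dvdn _ _).
have := divn_eq (i*s) p; have := ltn_pmod (i*s) p0.
have := divn_eq (i*(p-s)) p; have := ltn_pmod (i*(p-s)) p0.
move: r0.
set q := (i * s %/ p)%N; set r := (i * s %% p)%N.
set q' := (i * (p-s) %/ p)%N; set r' := (i * (p-s) %% p)%N.
clearbody q r q' r'.
move=> *.
have e : (i * p = (q + q') * p + (r + r'))%N.
  have -> : (i * p = i * s + i * (p - s))%N by rewrite -mulnDr subnKC //; lia.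
  lia.
have h1 : (q + q' < i)%N.
  rewrite -(ltn_pmul2r p0); lia.
have h2 : (i - (q + q') < 2)%N.
  rewrite -(ltn_pmul2r p0) mulnBl; lia.
lia.
Qed.

Lemma per_dl p s dl : prime p -> (1 <= s <= p - 1)%N -> (1 <= dl <= p)%N ->
  (\sum_(1 <= i < dl) (i * s %/ p) + \sum_(1 <= i < dl) (i * (p - s) %/ p) + dl
   = ((dl - 1) * dl) %/ 2 + 1)%N.
Proof.
move=> pp hs /andP[d1 d2].
rewrite -big_split /=.
rewrite (@eq_big_nat _ _ _ 1 dl _ (fun i => i - 1)%N); last first.
  move=> i /andP[i1 i2]; apply: pair_term => //; rewrite i1 /=; lia.
case: dl d1 d2 => // n _ _.
have := tri n. rewrite /= subn1 /=. lia.
Qed.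

Lemma sum_all p s ds : prime p -> (1 <= s <= p - 1)%N ->
  all (fun dl => (1 <= dl <= p)%N) ds ->
  (sht_V p ds s + sht_V p ds (p - s) + \sum_(dl <- ds) dl = D_V ds + size ds)%N.
Proof.
move=> pp hs; rewrite /sht_V /D_V.
elim: ds => [|d ds IH] /=; first by rewrite !big_nil.
move=> /andP[hd hds]; rewrite !big_cons.
have := @per_dl p s d pp hs hd; have := IH hds; lia.
Qed.

Local Open Scope ring_scope.
Theorem lemma3p2 (p : nat) (ds : seq nat) (s : nat) :
  prime p ->
  all (fun dl => (1 <= dl <= p)%N) ds ->
  (1 <= s <= p - 1)%N ->
  (s%:Z - (sht_V p ds s)%:Z =
   (sht_V p ds (p - s))%:Z + s%:Z + (\sum_(dl <- ds) dl)%N%:Z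
     - (size ds)%:Z - (D_V ds)%:Z)%R.
Proof.
move=> pp hall hs.
have := @sum_all p s ds pp hs hall.
move: (sht_V p ds s) (sht_V p ds (p - s)) (\sum_(dl <- ds) dl)%N (D_V ds) (size ds).
move=> a b c d e h; lia.
Qed.
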